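(* Let $h\in\mathcal{L}[t]$ be such that its Newton polygon $N_h$ has at least two edges, and let $P=(d,e)$ be the first break point of $N_h$ (the break point with least $x$-coordinate). Then: (1) there are $f,g\in\mathcal{L}[t]$ with $\deg_t(f)=d$, $N_f$ consisting of exactly the first edge of $N_h$, and $h=f\cdot g$; (2) there are $f,g\in\mathcal{L}[t]$ with $\deg_t(f)=d$, $N_f$ consisting of exactly the first edge of $N_h$, and $h=g\cdot f$.
   Context: $(\mathcal{L},v)$ is a complete discretely valued skew field (division ring with $v:\mathcal{L}\to\mathbb{Z}\cup\{\infty\}$, $v(x)=\infty\iff x=0$, $v(x+y)\ge\min\{v(x),v(y)\}$, $v(xy)=v(x)+v(y)$, such that every series $\sum x_i$ with $v(x_i)\to\infty$ converges). $\mathcal{L}[t]$ is the polynomial ring in a central indeterminate $t$. The Newton polygon $N_f$ of $f=\sum a_it^i$ is the lower convex hull of the points $(i,v(a_i))$ with $a_i\ne0$; a break point is a vertex where two edges meet; an edge from $(i,w_i)$ to $(j,w_j)$ has length $|j-i|$ and slope $(w_j-w_i)/(j-i)$. *)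

(* Defs.v *)
From HB Require Import structures.
From mathcomp Require Import all_boot all_order all_algebra.
Set Implicit Arguments. Unset Strict Implicit. Unset Printing Implicit Defensive.
Import Order.TTheory GRing.Theory Num.Theory.
Local Open Scope ring_scope.

Definition skew_field (L : unitRingType) : Prop :=
  forall x : L, x != 0 -> x \is a GRing.unit.

(* Discrete valuation v : L -> Z ∪ {oo}; we record v only on nonzero elements
   (v 0 = oo is implicit: the value v 0 is never used). *)
Definition discrete_valuation (L : unitRingType) (v : L -> int) : Prop :=
  (forall x y : L, x != 0 -> y != 0 -> v (x * y) = v x + v y) /\
  (forall x y : L, x != 0 -> y != 0 -> x + y != 0 ->
      Num.min (v x) (v y) <= v (x + y)).

(* v(x_i) -> oo, where v 0 = oo *)
Definition val_to_oo (L : unitRingType) (v : L -> int) (x : nat -> L) : Prop :=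
  forall N : int, exists n0 : nat, forall n : nat, (n0 <= n)%N ->
    x n = 0 \/ N <= v (x n).

Definition val_cvg (L : unitRingType) (v : L -> int) (u : nat -> L) (l : L) : Prop :=
  val_to_oo v (fun n => u n - l).

Definition val_complete (L : unitRingType) (v : L -> int) : Prop :=
  forall x : nat -> L, val_to_oo v x ->
    exists l : L, val_cvg v (fun n => \sum_(i < n) x i) l.

Definition complete_dv_skew_field (L : unitRingType) (v : L -> int) : Prop :=
  [/\ skew_field L, discrete_valuation v & val_complete v].

(* Convex hull of the points (i, v(a_i)), a_i != 0, for f = sum a_i t^i. *)
Definition newton_hull (L : unitRingType) (v : L -> int) (f : {poly L})
    (p : rat * rat) : Prop :=
  exists c : nat -> rat,
    [/\ forall i, 0 <= c i,
        forall i, f`_i = 0 -> c i = 0,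
        \sum_(i < size f) c i = 1,
        p.1 = \sum_(i < size f) c i * i%:R
      & p.2 = \sum_(i < size f) c i * (v f`_i)%:~R].

(* The Newton polygon N_f: the lower convex hull, i.e. the points of the
   convex hull that are lowest on their vertical line. *)
Definition newton_polygon (L : unitRingType) (v : L -> int) (f : {poly L})
    (p : rat * rat) : Prop :=
  newton_hull v f p /\
  forall q, newton_hull v f q -> q.1 = p.1 -> p.2 <= q.2.

(* A break point: a point of N_f with points of N_f strictly on its left and
   on its right (two edges meet there) which is a vertex, i.e. does not lie in
   the relative interior of a segment joining two points of N_f. *)
Definition break_point (L : unitRingType) (v : L -> int) (f : {poly L})
    (p : rat * rat) : Prop :=
  [/\ newton_polygon v f p,
      exists q, newton_polygon v f q /\ q.1 < p.1,
      exists q, newton_polygon v f q /\ p.1 < q.1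
    & ~ exists q1 q2 (lam : rat),
          [/\ newton_polygon v f q1, newton_polygon v f q2,
              q1.1 < p.1 < q2.1, 0 < lam < 1
            & p = (lam * q1.1 + (1 - lam) * q2.1, lam * q1.2 + (1 - lam) * q2.2)]].

(* Main.v *)
Require Import Defs.
From HB Require Import structures.
From mathcomp Require Import all_boot all_order all_algebra.
From mathcomp Require Import zify ring lra.
From Stdlib Require Import ClassicalEpsilon.
Import Order.TTheory GRing.Theory Num.Theory.
Local Open Scope ring_scope.
Set Implicit Arguments. Unset Strict Implicit. Unset Printing Implicit Defensive.

Section Val.
Variables (L : unitRingType) (v : L -> int).
Hypothesis Hv : discrete_valuation v.
Hypothesis HS : skew_field L.

Lemma v1 : v 1 = 0.
Proof.
case: Hv => Hm _; have := Hm 1 1 (oner_neq0 _) (oner_neq0 _).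
rewrite mulr1 => /eqP; rewrite -subr_eq0 opprD addrA subrr sub0r oppr_eq0.
by move/eqP.
Qed.

Lemma vN x : x != 0 -> v (- x) = v x.
Proof.
case: Hv => Hm _ x0.
have n10 : (-1 : L) != 0 by rewrite oppr_eq0 oner_neq0.
have : v ((-1) * (-1)) = v (-1) + v (-1) by apply: Hm.
rewrite mulrNN mulr1 v1 => h.
have hm1 : v (-1) = 0 by lia.
by rewrite -mulN1r Hm // hm1 add0r.
Qed.

Lemma vM x y : x != 0 -> y != 0 -> v (x * y) = v x + v y.
Proof. by case: Hv => Hm _; apply: Hm. Qed.

Lemma mul_neq0 (x y : L) : x != 0 -> y != 0 -> x * y != 0.
Proof.
move=> x0 y0; apply/eqP => xy0.
have ux := HS x0.
have : x^-1 * (x * y) = 0 by rewrite xy0 mulr0.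
by rewrite mulrA mulVr // mul1r; apply/eqP.
Qed.

Variable D : int.
Hypothesis HD : 0 < D.

Definition vge (m : int) (x : L) := x = 0 \/ m <= D * v x.

Lemma vge0 m : vge m 0. Proof. by left. Qed.

Lemma vge_le m m' x : m' <= m -> vge m x -> vge m' x.
Proof. by move=> le [->|h]; [left|right; apply: le_trans h]. Qed.

Lemma vgeN m x : vge m x -> vge m (- x).
Proof.
case=> [->|h]; first by rewrite oppr0; left.
case: (eqVneq x 0) => [->|x0]; first by rewrite oppr0; left.
by right; rewrite vN.
Qed.

Lemma vgeD m x y : vge m x -> vge m y -> vge m (x + y).
Proof.
case=> [->|hx]; first by rewrite add0r.
case=> [->|hy]; first by rewrite addr0; right.
case: (eqVneq x 0) => [->|x0]; first by rewrite add0r; right.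
case: (eqVneq y 0) => [->|y0]; first by rewrite addr0; right.
case: (eqVneq (x + y) 0) => [->|s0]; first by left.
right; case: Hv => _ /(_ x y x0 y0 s0); rewrite ge_min => /orP[] h.
  by apply: le_trans hx _; rewrite ler_pM2l.
by apply: le_trans hy _; rewrite ler_pM2l.
Qed.

Lemma vgeB m x y : vge m x -> vge m y -> vge m (x - y).
Proof. by move=> hx hy; apply: vgeD => //; apply: vgeN. Qed.

Lemma vge_sum m I (r : seq I) (P : pred I) (F : I -> L) :
  (forall i, P i -> vge m (F i)) -> vge m (\sum_(i <- r | P i) F i).
Proof.
move=> h; elim/big_ind: _ => //; first exact: vge0.
by move=> x y; apply: vgeD.
Qed.

Lemma vgeM a b x y : vge a x -> vge b y -> vge (a + b) (x * y).
Proof.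
case=> [->|hx]; first by rewrite mul0r; left.
case=> [->|hy]; first by rewrite mulr0; left.
case: (eqVneq x 0) => [->|x0]; first by rewrite mul0r; left.
case: (eqVneq y 0) => [->|y0]; first by rewrite mulr0; left.
by right; rewrite vM // mulrDr lerD.
Qed.

Lemma vge_self x : vge (D * v x) x.
Proof. by right. Qed.

Lemma vge_strict x y : x != 0 -> vge (D * v x + 1) y -> x + y != 0 /\ v (x + y) = v x.
Proof.
move=> x0 hy.
have vy : y = 0 \/ (y != 0 /\ v x < v y).
  case: hy => [->|h]; first by left.
  case: (eqVneq y 0) => [->|y0]; first by left.
  right; split => //; rewrite -(ltr_pM2l HD); apply: lt_le_trans h; rewrite ltrDl //.
case: vy => [->|[y0 lt]]; first by rewrite addr0.
have s0 : x + y != 0.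
  apply/eqP => s0; have yx : y = - x by apply/eqP; rewrite -addr_eq0 addrC s0.
  by move: lt; rewrite yx vN // ltxx.
split=> //; case: Hv => _ Ha.
have h1 := Ha _ _ x0 y0 s0.
have ex : x = (x + y) + - y by rewrite addrK.
have ny0 : - y != 0 by rewrite oppr_eq0.
move: (Ha _ _ s0 ny0); rewrite -ex => /(_ x0); rewrite vN // => h2.
have h2' : v (x + y) <= v x.
  move: h2; rewrite ge_min => /orP[//|h2].
  by move: lt; rewrite ltNge h2.
move: h1; rewrite ge_min => /orP[h1|h1]; first by apply/eqP; rewrite eq_le h1 h2'.
by move: lt; rewrite ltNge (le_trans h1 h2').
Qed.

End Val.

Section Wt.
Variables (L : unitRingType) (v : L -> int).
Hypothesis Hv : discrete_valuation v.
Hypothesis HS : skew_field L.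
Variables (D N : int).
Hypothesis HD : 0 < D.

Definition wge (k : int) (p : {poly L}) := forall i : nat, vge v D (k + N * i%:Z) p`_i.

Lemma wge0 k : wge k 0.
Proof. by move=> i; rewrite coef0; apply: vge0. Qed.

Lemma wge_le k k' p : k' <= k -> wge k p -> wge k' p.
Proof. by move=> le h i; apply: vge_le (h i); rewrite lerD2r. Qed.

Lemma wgeD k p q : wge k p -> wge k q -> wge k (p + q).
Proof. by move=> hp hq i; rewrite coefD; apply: (vgeD Hv HD). Qed.

Lemma wgeN k p : wge k p -> wge k (- p).
Proof. by move=> hp i; rewrite coefN; apply: (vgeN Hv). Qed.

Lemma wgeB k p q : wge k p -> wge k q -> wge k (p - q).
Proof. by move=> hp hq; apply: wgeD => //; apply: wgeN. Qed.

Lemma wgeM a b p q : wge a p -> wge b q -> wge (a + b) (p * q).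
Proof.
move=> hp hq i; rewrite coefM; apply: (vge_sum Hv HD) => -[j /= hj] _.
apply: vge_le (vgeM Hv (hp j) (hq (i - j)%N)).
rewrite -subzn; last by rewrite -ltnS.
have -> : a + N * j%:Z + (b + N * (i%:Z - j%:Z)) = a + b + N * i%:Z by ring.
by [].
Qed.

Lemma wge_all0 p : (forall k, wge k p) -> p = 0.
Proof.
move=> h; apply/polyP => i; rewrite coef0.
case: (eqVneq p`_i 0) => // pi0.
case: (h (D * v p`_i - N * i%:Z + 1) i) => [//|].
rewrite addrAC subrK => hh; move: hh.
by rewrite gerDl ler10.

Qed.

Lemma wgeCX m c k : vge v D (m + N * k%:Z) c -> wge m (c%:P * 'X^k).
Proof.
move=> hc i; rewrite coefCM coefXn.
case: (eqVneq i k) => [->|_]; first by rewrite mulr1.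
by rewrite mulr0; apply: vge0.
Qed.

End Wt.

Section Est.
Variables (L : unitRingType) (v : L -> int).
Hypothesis Hv : discrete_valuation v.
Hypothesis HS : skew_field L.
Variables (D N : int).
Hypothesis HD : 0 < D.
Variables (H : {poly L}) (d : nat).
Hypothesis Hmon : H \is monic.
Hypothesis Hsize : size H = d.+1.
Hypothesis HwH : wge v D N (- (N * d%:Z)) H.

Lemma est_aux n (q r T : {poly L}) (m : int) : (size q <= n)%N -> T = q * H + r -> (size r <= d)%N ->
  wge v D N (- (N * d%:Z) + m) T ->
  wge v D N m q /\ wge v D N (- (N * d%:Z) + m) r.
Proof.
elim: n q r T => [|n IH] q r T.
  rewrite leqn0 size_poly_eq0 => /eqP -> ->; rewrite mul0r add0r => _ hr.
  by split=> //; apply: wge0.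
move=> sq ET sr hT.
case: (eqVneq q 0) => [q0|qn0].
  by move: ET; rewrite q0 mul0r add0r => <-; split=> //; apply: wge0.
set k := (size q).-1.
set c := lead_coef q.
have sqk : size q = k.+1 by rewrite /k prednK // size_poly_gt0.
have sqH : size (q * H) = (k + d).+1 by rewrite size_Mmonic // Hsize sqk addSn addnS.
have Tc : T`_(k + d) = c.
  rewrite ET coefD [r`_(k + d)]nth_default; last by apply: leq_trans sr (leq_addl _ _).
  by rewrite addr0 /c -(lead_coef_Mmonic q Hmon) /lead_coef sqH.
have hc : vge v D (m + N * k%:Z) c.
  have := hT (k + d)%N; rewrite Tc; apply: vge_le.
  rewrite PoszD; have -> : - (N * d%:Z) + m + N * (k%:Z + d%:Z) = m + N * k%:Z by ring.
  by [].
set M := c%:P * 'X^k.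
have hM : wge v D N m M by apply: wgeCX.
have sq' : (size (q - M)%R <= n)%N.
  rewrite -ltnS; apply: leq_trans sq; rewrite sqk ltnS.
  apply/leq_sizeP => j; rewrite leq_eqVlt => /orP[/eqP <-|kj].
    by rewrite coefB coefCM coefXn eqxx mulr1 /c /lead_coef -/k subrr.
  rewrite coefB coefCM coefXn (gtn_eqF kj) mulr0 subr0 nth_default //.
  by rewrite sqk.
have ET' : T - M * H = (q - M) * H + r by rewrite ET mulrBl addrAC.
have hMH : wge v D N (- (N * d%:Z) + m) (M * H).
  by rewrite addrC; apply: wgeM.
have [hq' hr] := IH _ _ _ sq' ET' sr (wgeB Hv HD hT hMH).
split=> //; have -> : q = (q - M) + M by rewrite subrK.
exact: wgeD.
Qed.

Lemma est (q r T : {poly L}) (m : int) : T = q * H + r -> (size r <= d)%N ->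
  wge v D N (- (N * d%:Z) + m) T ->
  wge v D N m q /\ wge v D N (- (N * d%:Z) + m) r.
Proof. exact: (@est_aux (size q)). Qed.

End Est.

Lemma size_subd (L : nzRingType) (p q : {poly L}) d :
  (size p <= d)%N -> (size q <= d)%N -> (size (p - q)%R <= d)%N.
Proof.
move=> hp hq; apply: leq_trans (size_polyD _ _) _.
by rewrite size_polyN geq_max hp hq.
Qed.

Lemma size_quot (L : nzRingType) (H q r T : {poly L}) d :
  H \is monic -> size H = d.+1 -> T = q * H + r -> (size r <= d)%N ->
  (size q <= size T - d)%N.
Proof.
move=> Hm sH ET sr; case: (eqVneq q 0) => [->|q0]; first by rewrite size_poly0.
have sqH : size (q * H) = (size q + d)%N by rewrite size_Mmonic // sH addnS.
have : size T = (size q + d)%N.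
  rewrite ET size_polyDl sqH //; apply: leq_ltn_trans sr _.
  by rewrite -{1}(add0n d) ltn_add2r size_poly_gt0.
by move=> ->; rewrite addnK.
Qed.

Lemma zmod_id1 (V : zmodType) (p1 f g1H gH gkpk gpk gf : V) :
  (gkpk + g1H + p1) - f - gH - gf =
  (p1 - f) + (g1H - gH) + (gkpk - gpk) + (gpk - gf).
Proof.
rewrite -[RHS]addrA subrKA [p1 - f + _]addrACA addrACA !addrA.
rewrite (addrAC _ (- gH) gkpk) (addrAC p1 (-f) g1H) (addrAC _ (-f) gkpk).
have -> : p1 + g1H + gkpk = gkpk + g1H + p1 by rewrite addrC (addrC p1) addrA.
by [].
Qed.

Lemma ev_all (P : nat -> nat -> Prop) B :
  (forall i, (i < B)%N -> exists k0, forall k, (k0 <= k)%N -> P i k) ->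
  exists k0, forall k, (k0 <= k)%N -> forall i, (i < B)%N -> P i k.
Proof.
elim: B => [|B IH] h; first by exists 0%N.
have [k1 h1] := IH (fun i hi => h i (ltnW hi)).
have [k2 h2] := h B (ltnSn B).
exists (maxn k1 k2) => k hk i; rewrite ltnS leq_eqVlt => /orP[/eqP ->|hi].
  by apply: h2; apply: leq_trans hk; rewrite leq_maxr.
by apply: h1 => //; apply: leq_trans hk; rewrite leq_maxl.
Qed.

Section Lim.
Variables (L : unitRingType) (v : L -> int).
Hypothesis Hv : discrete_valuation v.
Hypothesis Hc : val_complete v.
Variables (D N : int).
Hypothesis HD : 0 < D.

Lemma telesc (P : nat -> {poly L}) i n : P 0%N = 0 ->
  \sum_(j < n) (P j.+1 - P j)`_i = (P n)`_i.
Proof.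
move=> P0; elim: n => [|n IH]; first by rewrite big_ord0 P0 coef0.
by rewrite big_ord_recr /= IH coefB addrC subrK.
Qed.

Lemma poly_lim (P : nat -> {poly L}) B : P 0%N = 0 ->
  (forall k, (size (P k) <= B)%N) ->
  (forall M, exists k0, forall k, (k0 <= k)%N -> wge v D N M (P k.+1 - P k)) ->
  exists Q : {poly L}, (size Q <= B)%N /\
    forall M, exists k0, forall k, (k0 <= k)%N -> wge v D N M (P k - Q).
Proof.
move=> P0 sP hP.
have ex : forall i : nat, exists l : L,
    val_cvg v (fun n => \sum_(j < n) (P j.+1 - P j)`_i) l.
  move=> i; have hh : val_to_oo v (fun j : nat => (P j.+1 - P j)`_i); last first.
    by have [l hl] := Hc hh; exists l.
  move=> N'.
  have [k0 hk0] := hP (D * N' - N * i%:Z); exists k0 => k hk.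
  case: (hk0 k hk i) => [->|h]; first by left.
  right; rewrite subrK in h; by rewrite -(ler_pM2l HD).
pose l i := proj1_sig (constructive_indefinite_description _ (ex i)).
have hl : forall i, val_cvg v (fun n => \sum_(j < n) (P j.+1 - P j)`_i) (l i).
  by move=> i; rewrite /l; case: constructive_indefinite_description.
exists (\poly_(i < B) l i); split; first exact: size_poly.
move=> M.
have [k0 hk0] : exists k0, forall k, (k0 <= k)%N -> forall i, (i < B)%N ->
    vge v D (M + N * i%:Z) (P k - \poly_(i < B) l i)`_i.
  apply: ev_all => i hi; have [k0 hk0] := hl i `|M + N * i%:Z|.
  exists k0 => k hk; rewrite coefB coef_poly hi.
  case: (hk0 k hk) => h; rewrite telesc // in h; first by rewrite h; left.
  right; move: h (ler_norm (M + N * i%:Z)) (normr_ge0 (M + N * i%:Z)) HD.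
  set y := v _; set a := `|_|; move=> h1 h2 h3 h4; nia.
exists k0 => k hk i; case: (ltnP i B) => hi; first by apply: hk0.
rewrite coefB coef_poly ltnNge hi /= subr0 nth_default; first by left.
exact: leq_trans (sP k) hi.
Qed.

End Lim.

Section Core.
Variables (L : unitRingType) (v : L -> int).
Hypothesis Hv : discrete_valuation v.
Hypothesis HS : skew_field L.
Hypothesis Hc : val_complete v.
Variables (D N : int).
Hypothesis HD : 0 < D.
Variables (H K : {poly L}) (d n : nat).
Hypothesis Hmon : H \is monic.
Hypothesis Hsize : size H = d.+1.
Hypothesis HwH : wge v D N (- (N * d%:Z)) H.
Hypothesis HwK : wge v D N (- (N * d%:Z) + 1) K.
Hypothesis HsK : (size K <= n.+1)%N.
Hypothesis Hdn : (d <= n)%N.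

Local Notation C := (- (N * d%:Z)).
Local Notation wg := (wge v D N).

Definition step (s : {poly L} * {poly L}) :=
  let T := K - s.1 * s.2 in (Pdiv.Ring.rdivp T H, Pdiv.Ring.rmodp T H).

Definition sqn k := iter k step (0, 0).
Definition gam k := (sqn k).1.
Definition phi k := (sqn k).2.

Lemma eqk k : K - gam k * phi k = gam k.+1 * H + phi k.+1.
Proof. exact: Pdiv.RingMonic.rdivp_eq. Qed.

Lemma H0 : H != 0.
Proof. by rewrite -size_poly_eq0 Hsize. Qed.

Lemma sphi k : (size (phi k) <= d)%N.
Proof.
case: k => [|k]; first by rewrite /phi /= size_poly0.
by rewrite -ltnS -Hsize; apply: Pdiv.Ring.ltn_rmodpN0; apply: H0.
Qed.

Lemma sgam k : (size (gam k) <= n.+1 - d)%N.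
Proof.
elim: k => [|k IH]; first by rewrite /gam /= size_poly0.
apply: leq_trans (size_quot Hmon Hsize (eqk k) (sphi _)) _.
rewrite leq_sub2r //; apply: leq_trans (size_polyD _ _) _.
rewrite size_polyN geq_max HsK; apply: leq_trans (size_polyMleq _ _) _.
have := sphi k; move: IH => a b; apply: leq_trans (leq_pred _) _.
apply: leq_trans (leq_add a b) _; rewrite subnK //; exact: leqW.
Qed.

Lemma inv k : wg 1 (gam k) /\ wg (C + 1) (phi k).
Proof.
elim: k => [|k [IH1 IH2]]; first by split; apply: wge0.
have hT : wg (C + 1) (K - gam k * phi k).
  apply: (wgeB Hv HD) => //; apply: wge_le _ (wgeM Hv HD IH1 IH2); lia.
have [h1 h2] := est Hv HD Hmon Hsize HwH (eqk k) (sphi _) hT.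
by split.
Qed.

Lemma diff k : wg (k.+1)%:Z (gam k.+1 - gam k) /\ wg (C + (k.+1)%:Z) (phi k.+1 - phi k).
Proof.
elim: k => [|k [IH1 IH2]].
  by rewrite /gam /phi /= !subr0; have [] := inv 1.
have E : (K - gam k.+1 * phi k.+1) - (K - gam k * phi k) =
    (gam k.+2 - gam k.+1) * H + (phi k.+2 - phi k.+1).
  rewrite eqk eqk mulrBl opprD addrACA.
  by [].
have E2 : (K - gam k.+1 * phi k.+1) - (K - gam k * phi k) =
   - ((gam k.+1 - gam k) * phi k.+1 + gam k * (phi k.+1 - phi k)).
  rewrite mulrBl mulrBr addrA subrK opprB.
  by rewrite opprB addrC subrKA.
have [i1 i2] := inv k.+1; have [i3 i4] := inv k.
have hT : wg (C + (k.+2)%:Z) ((K - gam k.+1 * phi k.+1) - (K - gam k * phi k)).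
  rewrite E2; apply: (wgeN Hv); apply: (wgeD Hv HD).
    by apply: wge_le _ (wgeM Hv HD IH1 i2); lia.
  by apply: wge_le _ (wgeM Hv HD i3 IH2); lia.
have [h1 h2] := est Hv HD Hmon Hsize HwH E (size_subd (sphi _) (sphi _)) hT.
by split.
Qed.

Lemma core_norm : exists gm ph : {poly L},
  [/\ H + K = (1 + gm) * (H + ph), (size ph <= d)%N, wg 1 gm & wg (C + 1) ph].
Proof.
have [G [sG hG]] : exists G : {poly L}, (size G <= n.+1 - d)%N /\
    forall M, exists k0, forall k, (k0 <= k)%N -> wg M (gam k - G).
  apply: (@poly_lim _ _ Hc D N HD gam (n.+1 - d) (erefl _) sgam) => M.
  exists (absz M) => k hk; apply: wge_le (proj1 (diff k)); lia.
have [F [sF hF]] : exists F : {poly L}, (size F <= d)%N /\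
    forall M, exists k0, forall k, (k0 <= k)%N -> wg M (phi k - F).
  apply: (@poly_lim _ _ Hc D N HD phi d (erefl _) sphi) => M.
  exists (absz (M - C)) => k hk; apply: wge_le (proj2 (diff k)); lia.
have wG : wg 1 G.
  have [k0 hk0] := hG 1; have -> : G = gam k0 - (gam k0 - G) by rewrite subKr.
  by apply: (wgeB Hv HD) => //; [case: (inv k0) | apply: hk0].
have wF : wg (C + 1) F.
  have [k0 hk0] := hF (C + 1); have -> : F = phi k0 - (phi k0 - F) by rewrite subKr.
  by apply: (wgeB Hv HD) => //; [case: (inv k0) | apply: hk0].
have E0 : K - F - G * H - G * F = 0.
  apply: wge_all0 => M.
  pose M' := Num.max M (M - C).
  have [k1 hk1] := hG M'; have [k2 hk2] := hF M'.
  pose k := maxn k1 k2.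
  have hk1' : (k1 <= k)%N by rewrite leq_maxl.
  have hk2' : (k2 <= k)%N by rewrite leq_maxr.
  have e1 := eqk k.
  have -> : K - F - G * H - G * F =
     (phi k.+1 - F) + (gam k.+1 - G) * H + (gam k - G) * phi k + G * (phi k - F).
    rewrite (_ : K = gam k * phi k + gam k.+1 * H + phi k.+1); last first.
      by rewrite -addrA -e1 addrC subrK.
    by rewrite !mulrBl mulrBr (zmod_id1 _ _ _ _ _ (G * phi k)).
  have [i1 i2] := inv k.
  have M'1 : M <= M' by rewrite le_max lexx.
  have M'2 : M <= M' + C.
    have : M - C <= M' by rewrite le_max lexx orbT.
    lia.
  apply: (wgeD Hv HD); first apply: (wgeD Hv HD); first apply: (wgeD Hv HD).
  - by apply: wge_le (hk2 k.+1 (leqW hk2')).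
  - by apply: wge_le (wgeM Hv HD (hk1 k.+1 (leqW hk1')) HwH).
  - by apply: wge_le (wgeM Hv HD (hk1 k hk1') i2); lia.
  - by apply: wge_le (wgeM Hv HD wG (hk2 k hk2')); lia.
exists G, F; split=> //.
rewrite mulrDl mul1r mulrDr -addrA; congr (_ + _).
by apply/eqP; rewrite -subr_eq0 !opprD !addrA; apply/eqP.
Qed.

End Core.

Section Core2.
Variables (L : unitRingType) (v : L -> int).
Hypothesis Hv : discrete_valuation v.
Hypothesis HS : skew_field L.
Hypothesis Hc : val_complete v.
Variables (D N : int).
Hypothesis HD : 0 < D.

Lemma core2 (h : {poly L}) (d : nat) :
  h`_d != 0 ->
  (forall i, h`_i != 0 -> D * v h`_d - N * d%:Z <= D * v h`_i - N * i%:Z) ->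
  (forall i, (d < i)%N -> h`_i != 0 -> D * v h`_d - N * d%:Z < D * v h`_i - N * i%:Z) ->
  exists g f : {poly L}, [/\ h = g * f, size f = d.+1,
     (forall i, f`_i != 0 -> D * v h`_d - N * d%:Z <= D * v f`_i - N * i%:Z),
     (forall i, (i <= d)%N -> h`_i != 0 -> D * v h`_i - N * i%:Z = D * v h`_d - N * d%:Z ->
        f`_i != 0 /\ v f`_i = v h`_i)
   & (forall j, (forall k, (k <= j)%N -> h`_k = 0) -> f`_j = 0)].
Proof.
set a := h`_d; set C0 := D * v a - N * d%:Z => a0 Hline Hstr.
have ua := HS a0.
set ai := a^-1.
have ai0 : ai != 0 by rewrite invr_eq0.
have vai : v ai = - v a.
  have := vM Hv a0 ai0; rewrite mulrV // v1 // => e; lia.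
set h' := h * ai%:P.
have ch' i : h'`_i = h`_i * ai by rewrite coefMC.
have sh : (d < size h)%N by rewrite ltnNge; apply/negP => /leq_sizeP /(_ d (leqnn d)); apply/eqP.
set n := (size h).-1.
have Hdn : (d <= n)%N by rewrite /n -ltnS prednK //; apply: leq_ltn_trans sh.
have vh' i : vge v D (- (N * d%:Z) + N * i%:Z) h'`_i.
  rewrite ch'; case: (eqVneq h`_i 0) => [->|hi0]; first by rewrite mul0r; left.
  right; rewrite (vM Hv) // vai; have := Hline i hi0; rewrite /C0; lia.
have vh's i : (d < i)%N -> vge v D (- (N * d%:Z) + 1 + N * i%:Z) h'`_i.
  move=> di; rewrite ch'; case: (eqVneq h`_i 0) => [->|hi0]; first by rewrite mul0r; left.
  right; rewrite (vM Hv) // vai; have := Hstr i di hi0; rewrite /C0; lia.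
set H := \poly_(i < d.+1) h'`_i.
set K := h' - H.
have cH i : H`_i = if (i < d.+1)%N then h'`_i else 0 by rewrite coef_poly.
have cK i : K`_i = if (i < d.+1)%N then 0 else h'`_i.
  by rewrite coefB cH; case: ifP => _; rewrite ?subrr ?subr0.
have Hd1 : H`_d = 1 by rewrite cH ltnSn ch' mulrV.
have sH : size H = d.+1 by apply: size_poly_eq; rewrite /= ch' mulrV // oner_neq0.
have mH : H \is monic by rewrite monicE /lead_coef sH Hd1.
have wH : wge v D N (- (N * d%:Z)) H.
  by move=> i; rewrite cH; case: ifP => _; [apply: vh' | left].
have wK : wge v D N (- (N * d%:Z) + 1) K.
  move=> i; rewrite cK; case: ifP => hi; first by left.
  by apply: vh's; rewrite ltnNge -ltnS hi.
have sK : (size K <= n.+1)%N.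
  apply/leq_sizeP => j hj; rewrite cK ch'; case: ifP => // _.
  by rewrite nth_default ?mul0r // -(prednK (leq_ltn_trans (leq0n _) sh)).
have [gm [ph [Eh sph wgm wph]]] := core_norm Hv Hc HD mH sH wH wK sK Hdn.
have hh' : h = h' * a%:P by rewrite /h' -mulrA -polyCM mulVr // mulr1.
have HK : H + K = h' by rewrite /K addrC subrK.
set f := (H + ph) * a%:P.
set g := 1 + gm.
have Ehgf : h = g * f by rewrite hh' -HK Eh mulrA.
have cf i : f`_i = if (i <= d)%N then h`_i + ph`_i * a else 0.
  rewrite /f coefMC coefD cH ltnS mulrDl; case: ifP => hi.
    by rewrite ch' -mulrA mulVr // mulr1.
  rewrite mul0r add0r nth_default ?mul0r //; apply: leq_trans sph _; move: hi; rewrite leqNgt => /negbFE hi; exact: ltnW.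
have vpa i : vge v D (C0 + 1 + N * i%:Z) (ph`_i * a).
  apply: vge_le (vgeM Hv (wph i) (vge_self v D a)); rewrite /C0; lia.
have sf : size f = d.+1.
  apply/eqP; rewrite eqn_leq; apply/andP; split.
    by apply/leq_sizeP => j hj; rewrite cf leqNgt hj.
  rewrite ltnNge; apply/negP => /leq_sizeP /(_ d (leqnn d)) /eqP.
  rewrite cf leqnn [ph`_d]nth_default ?mul0r ?addr0 //; exact/negP.
exists g, f; split=> //.
- move=> i; rewrite cf; case: ifP => hi; last by rewrite eqxx.
  move=> fi0; suff : vge v D (C0 + N * i%:Z) (h`_i + ph`_i * a).
    by case=> [e|]; [rewrite e eqxx in fi0 | lia].
  apply: (vgeD Hv HD); last by apply: vge_le (vpa i); lia.
  case: (eqVneq h`_i 0) => [->|hi0]; first by left.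
  by right; have := Hline i hi0; lia.
- move=> i hi hi0 el; rewrite cf hi.
  apply: (vge_strict Hv HD hi0); apply: vge_le (vpa i); rewrite /C0; lia.
have g00 : g`_0 != 0.
  rewrite /g coefD coef1 eqxx; have [] := vge_strict Hv HD (oner_neq0 L) (y := gm`_0) => //.
  by apply: vge_le (wgm 0%N); rewrite (v1 Hv) mulr0 add0r mulr0 addr0.
have key : forall j, (forall k, (k <= j)%N -> h`_k = 0) -> forall j', (j' <= j)%N -> f`_j' = 0.
  elim=> [|j IH] hz j' hj'.
    move: hj'; rewrite leqn0 => /eqP ->.
    have := hz 0%N (leqnn _); rewrite Ehgf coefM big_ord_recl big_ord0 addr0 /= => /eqP.
    by apply: contraTeq => f0; apply: mul_neq0.
  move: hj'; rewrite leq_eqVlt => /orP[/eqP ->|]; last first.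
    by rewrite ltnS; apply: IH => k hk; apply: hz; apply: leqW.
  have := hz j.+1 (leqnn _); rewrite Ehgf coefM big_ord_recl /=.
  rewrite big1 ?addr0; last first.
    move=> [k hk] _ /=; rewrite IH ?mulr0 //; first by move=> k' hk'; apply: hz; apply: leqW.
    by rewrite /bump /= subSS leq_subr.
  rewrite subn0 => /eqP; by apply: contraTeq => f0; apply: mul_neq0.
by move=> j hz; apply: (key j hz).
Qed.
End Core2.

Section Conv.
Variable (L : unitRingType).

Definition conv (p : {poly L}) : {poly L^c} := \poly_(i < size p) (p`_i : L^c).
Definition unconv (p : {poly L^c}) : {poly L} := \poly_(i < size p) (p`_i : L).

Lemma coef_conv p i : (conv p)`_i = p`_i.
Proof. by rewrite coef_poly; case: ltnP => // hi; rewrite nth_default. Qed.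

Lemma coef_unconv p i : (unconv p)`_i = p`_i.
Proof. by rewrite coef_poly; case: ltnP => // hi; rewrite nth_default. Qed.

Lemma unconvK p : unconv (conv p) = p.
Proof. by apply/polyP => i; rewrite coef_unconv coef_conv. Qed.

Lemma unconvM (p q : {poly L^c}) : unconv (p * q) = unconv q * unconv p.
Proof.
apply/polyP => i; rewrite coef_unconv coefM coefMr.
apply: eq_bigr => j _; by rewrite !coef_unconv.
Qed.

Lemma size_unconv p : size (unconv p) = size p.
Proof.
apply/eqP; rewrite eqn_leq; apply/andP; split.
  by apply/leq_sizeP => j hj; rewrite coef_unconv nth_default.
case: (posnP (size p)) => [->//|sp].
rewrite -(prednK sp) ltnNge; apply/negP => /leq_sizeP /(_ _ (leqnn _)).
rewrite coef_unconv => /eqP; have := lead_coef_eq0 p; rewrite /lead_coef => ->.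
by move=> /eqP p0; move: sp; rewrite p0 size_poly0.
Qed.

Variable v : L -> int.

Lemma complete_conv : complete_dv_skew_field v -> complete_dv_skew_field (L := L^c) v.
Proof.
case=> [HS [Hm Ha] Hc]; split => //.
split=> // x y x0 y0; rewrite addrC; exact: Hm.
Qed.

End Conv.

Section Core1.
Variables (L : unitRingType) (v : L -> int).
Hypothesis HL : complete_dv_skew_field v.
Variables (D N : int).
Hypothesis HD : 0 < D.

Lemma core_both (h : {poly L}) (d : nat) :
  h`_d != 0 ->
  (forall i, h`_i != 0 -> D * v h`_d - N * d%:Z <= D * v h`_i - N * i%:Z) ->
  (forall i, (d < i)%N -> h`_i != 0 -> D * v h`_d - N * d%:Z < D * v h`_i - N * i%:Z) ->
  forall b : bool, exists g f : {poly L}, [/\ h = (if b then g * f else f * g), size f = d.+1,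
     (forall i, f`_i != 0 -> D * v h`_d - N * d%:Z <= D * v f`_i - N * i%:Z),
     (forall i, (i <= d)%N -> h`_i != 0 -> D * v h`_i - N * i%:Z = D * v h`_d - N * d%:Z ->
        f`_i != 0 /\ v f`_i = v h`_i)
   & (forall j, (forall k, (k <= j)%N -> h`_k = 0) -> f`_j = 0)].
Proof.
move=> a0 Hl Hs [].
  case: HL => HS Hv Hc; exact: core2.
have [HS' Hv' Hc'] := complete_conv HL.
have := @core2 (L^c) v Hv' HS' Hc' D N HD (conv h) d.
rewrite !coef_conv => /(_ a0).
have Hl' : forall i, (conv h)`_i != 0 -> D * v h`_d - N * d%:Z <= D * v (conv h)`_i - N * i%:Z.
  by move=> i; rewrite coef_conv; apply: Hl.
have Hs' : forall i, (d < i)%N -> (conv h)`_i != 0 -> D * v h`_d - N * d%:Z < D * v (conv h)`_i - N * i%:Z.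
  by move=> i; rewrite coef_conv; apply: Hs.
move=> /(_ Hl' Hs') [g [f [Eh sf hl hon hz]]].
exists (unconv g), (unconv f); split.
- by rewrite -(unconvK h) Eh unconvM.
- by rewrite size_unconv.
- by move=> i; rewrite coef_unconv; apply: hl.
- by move=> i; rewrite coef_unconv -(coef_conv h); apply: hon.
- move=> j hk; rewrite coef_unconv; apply: hz => k hkj; rewrite coef_conv; exact: hk.
Qed.

End Core1.

Lemma sum_spike n a (x : rat) (g : nat -> rat) : (a < n)%N ->
  \sum_(i < n) (if (i : nat) == a then x else 0) * g i = x * g a.
Proof.
move=> ha; rewrite (bigD1 (Ordinal ha)) //= eqxx big1 ?addr0 // => i hi.
by rewrite ifF ?mul0r //; apply/negbTE; exact: hi.
Qed.

Lemma sum2 n a b (x y : rat) (g : nat -> rat) : (a < n)%N -> (b < n)%N ->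
  \sum_(i < n) ((if (i : nat) == a then x else 0) + (if (i : nat) == b then y else 0)) * g i
  = x * g a + y * g b.
Proof.
move=> ha hb; under eq_bigr do rewrite mulrDl.
by rewrite big_split /= !sum_spike.
Qed.

Lemma avg_ge n (c w : nat -> rat) lo : (forall i, 0 <= c i) -> \sum_(i < n) c i = 1 ->
  (forall i, (i < n)%N -> c i != 0 -> lo <= w i) -> lo <= \sum_(i < n) c i * w i.
Proof.
move=> c0 s1 h; have -> : lo = \sum_(i < n) c i * lo by rewrite -mulr_suml s1 mul1r.
apply: ler_sum => i _; case: (eqVneq (c i) 0) => [->|ci]; first by rewrite !mul0r.
by rewrite ler_wpM2l // h.
Qed.

Lemma avg_le n (c w : nat -> rat) hi : (forall i, 0 <= c i) -> \sum_(i < n) c i = 1 ->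
  (forall i, (i < n)%N -> c i != 0 -> w i <= hi) -> \sum_(i < n) c i * w i <= hi.
Proof.
move=> c0 s1 h; rewrite -lerN2; have -> : - \sum_(i < n) c i * w i = \sum_(i < n) c i * (- w i).
  by rewrite -sumrN; apply: eq_bigr => i _; rewrite mulrN.
by apply: (@avg_ge n c (fun i => - w i)) => // i hi' ci; rewrite lerN2; apply: h.
Qed.

Lemma ltn_coef (L : nzRingType) (F : {poly L}) a : F`_a != 0 -> (a < size F)%N.
Proof. by rewrite ltnNge; apply: contra => h; rewrite nth_default. Qed.

Section Geo.
Variables (L : unitRingType) (v : L -> int).

Lemma hull_x_ge (F : {poly L}) p B : (forall i, F`_i != 0 -> (B <= i)%N) ->
  newton_hull v F p -> B%:R <= p.1.
Proof.
move=> hB [c [c0 cz s1 -> _]]; apply: avg_ge => // i _ ci.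
case: (eqVneq F`_i 0) => [/cz e|]; first by rewrite e eqxx in ci.
by move/hB; rewrite ler_nat.
Qed.

Lemma hull_x_le (F : {poly L}) p B : (forall i, F`_i != 0 -> (i <= B)%N) ->
  newton_hull v F p -> p.1 <= B%:R.
Proof.
move=> hB [c [c0 cz s1 -> _]]; apply: avg_le => // i _ ci.
case: (eqVneq F`_i 0) => [/cz e|]; first by rewrite e eqxx in ci.
by move/hB; rewrite ler_nat.
Qed.

Definition ell (D N : int) (p : rat * rat) := D%:~R * p.2 - N%:~R * p.1.

Lemma ell_sum (F : {poly L}) (c : nat -> rat) (D N : int) :
  D%:~R * (\sum_(i < size F) c i * (v F`_i)%:~R) - N%:~R * (\sum_(i < size F) c i * i%:R)
  = \sum_(i < size F) c i * (D * v F`_i - N * i%:Z)%:~R.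
Proof.
rewrite !mulr_sumr -sumrB; apply: eq_bigr => i _; rewrite intrB !intrM.
rewrite [(i%:Z)%:~R]/=; have -> : (i%:Z)%:~R = i%:R :> rat by [].
ring.
Qed.

Lemma hull_lin (F : {poly L}) p (D N C : int) :
  (forall i, F`_i != 0 -> C <= D * v F`_i - N * i%:Z) ->
  newton_hull v F p -> C%:~R <= ell D N p.
Proof.
move=> h [c [c0 cz s1 e1 e2]]; rewrite /ell e1 e2 ell_sum.
apply: (avg_ge (w := fun i => (D * v F`_i - N * i%:Z)%:~R)) => // i _ ci; rewrite ler_int; apply: h.
by apply: contra ci => /eqP /cz ->.
Qed.

Lemma hull_gt (F : {poly L}) p (D N C : int) (d : nat) :
  (forall i, F`_i != 0 -> C <= D * v F`_i - N * i%:Z) ->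
  (forall i, (d < i)%N -> F`_i != 0 -> C < D * v F`_i - N * i%:Z) ->
  newton_hull v F p -> d%:R < p.1 -> C%:~R < ell D N p.
Proof.
move=> h hs [c [c0 cz s1 e1 e2]] hp; rewrite /ell e1 e2 ell_sum.
rewrite ltNge; apply/negP => hle.
set W := fun i : nat => (D * v F`_i - N * i%:Z)%:~R : rat.
have eS : \sum_(i < size F) c i * (W i - C%:~R) = 0.
  apply/eqP; rewrite eq_le; apply/andP; split.
    rewrite (eq_bigr (fun i : 'I_(size F) => c i * W i - c i * C%:~R)); last first.
      by move=> i _; rewrite mulrBr.
    by rewrite sumrB -mulr_suml s1 mul1r subr_le0.
  apply: sumr_ge0 => i _; case: (eqVneq (c i) 0) => [->|ci]; first by rewrite mul0r.
  apply: mulr_ge0 => //; rewrite subr_ge0 ler_int; apply: h.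
  by apply: contra ci => /eqP /cz ->.
have z : forall i : 'I_(size F), c i * (W i - C%:~R) = 0.
  move=> i; apply: (psumr_eq0P _ eS) => // j _.
  case: (eqVneq (c j) 0) => [->|cj]; first by rewrite mul0r.
  apply: mulr_ge0 => //; rewrite subr_ge0 ler_int; apply: h.
  by apply: contra cj => /eqP /cz ->.
move: hp; rewrite e1 ltNge => /negP; apply; apply: avg_le => // i hi ci.
rewrite ler_nat leqNgt; apply/negP => di.
have Fi : F`_i != 0 by apply: contra ci => /eqP /cz ->.
have := z (Ordinal hi); rewrite /= => /eqP; rewrite mulf_eq0 (negbTE ci) /= subr_eq0.
by rewrite /W eqr_int; apply/negP; rewrite gt_eqF // hs.
Qed.

Lemma hull_seg (F : {poly L}) a b (mu : rat) : F`_a != 0 -> F`_b != 0 -> 0 <= mu <= 1 ->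
  newton_hull v F (mu * a%:R + (1 - mu) * b%:R, mu * (v F`_a)%:~R + (1 - mu) * (v F`_b)%:~R).
Proof.
move=> Fa Fb /andP[m0 m1].
have ha := ltn_coef Fa; have hb := ltn_coef Fb.
exists (fun i => (if i == a then mu else 0) + (if i == b then 1 - mu else 0)); split => /=.
- move=> i; apply: addr_ge0; case: ifP => //; by rewrite subr_ge0.
- move=> i Fi.
  have na : (i == a) = false by apply/negbTE; apply/eqP => e; move: Fa; rewrite -e Fi eqxx.
  have nb : (i == b) = false by apply/negbTE; apply/eqP => e; move: Fb; rewrite -e Fi eqxx.
  by rewrite na nb addr0.
- have e := sum2 mu (1 - mu) (fun _ => 1) ha hb.
  apply: etrans (eq_bigr _ (fun i _ => esym (mulr1 _))) _.
  by rewrite e !mulr1 [mu + _]addrC subrK.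
- by rewrite (sum2 _ _ (fun k => k%:R)).
- by rewrite (sum2 _ _ (fun k => (v F`_k)%:~R)).
Qed.

Lemma ex_seg (F : {poly L}) (D N : int) (i0 d : nat) (x : rat) :
  (i0 < d)%N -> F`_i0 != 0 -> F`_d != 0 ->
  D * v F`_i0 - N * i0%:Z = D * v F`_d - N * d%:Z ->
  i0%:R <= x -> x <= d%:R ->
  exists q, [/\ newton_hull v F q, q.1 = x & ell D N q = (D * v F`_d - N * d%:Z)%:~R].
Proof.
move=> hid F0 Fd eC h1 h2.
have den0 : 0 < d%:R - i0%:R :> rat by rewrite subr_gt0 ltr_nat.
set mu := (d%:R - x) / (d%:R - i0%:R).
have m0 : 0 <= mu by apply: divr_ge0; lra.
have m1 : mu <= 1 by rewrite /mu ler_pdivrMr // mul1r; lra.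
have := hull_seg (mu := mu) F0 Fd; rewrite m0 m1 => /(_ isT) hq.
eexists; split; first exact: hq.
  by rewrite /= /mu; field; rewrite lt0r_neq0.
rewrite /ell /=.
have e0 : (D * v F`_i0 - N * i0%:Z)%:~R = D%:~R * (v F`_i0)%:~R - N%:~R * i0%:R :> rat.
  by rewrite intrB !intrM.
have e1 : (D * v F`_d - N * d%:Z)%:~R = D%:~R * (v F`_d)%:~R - N%:~R * d%:R :> rat.
  by rewrite intrB !intrM.
rewrite e1; have e2 := congr1 (fun z : int => z%:~R : rat) eC; rewrite /= e0 e1 in e2.
transitivity (mu * (D%:~R * (v F`_i0)%:~R - N%:~R * i0%:R) +
              (1 - mu) * (D%:~R * (v F`_d)%:~R - N%:~R * d%:R)); first by ring.
by rewrite e2; ring.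
Qed.

Lemma seg_poly (F : {poly L}) (D N : int) (i0 d : nat) :
  0 < D -> (i0 < d)%N -> F`_i0 != 0 -> F`_d != 0 ->
  (forall i, F`_i != 0 -> (i0 <= i)%N) ->
  D * v F`_i0 - N * i0%:Z = D * v F`_d - N * d%:Z ->
  (forall i, F`_i != 0 -> D * v F`_d - N * d%:Z <= D * v F`_i - N * i%:Z) ->
  forall p : rat * rat, p.1 <= d%:R ->
  (newton_polygon v F p <-> (i0%:R <= p.1 /\ ell D N p = (D * v F`_d - N * d%:Z)%:~R)).
Proof.
move=> HD hid F0 Fd Hlow eC Hl p hpd.
have Dr : 0 < D%:~R :> rat by rewrite ltr0z.
split.
  case=> hp hmin; have hx := hull_x_ge Hlow hp.
  have [q [hq q1 q2]] := ex_seg hid F0 Fd eC hx hpd.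
  have := hmin q hq q1; have := hull_lin Hl hp; move: q2; rewrite /ell q1.
  move=> q2 l1 l2; split=> //; apply/eqP; rewrite eq_le l1 andbT -q2.
  rewrite lerD2r; rewrite ler_pM2l //.
case=> hx hl; have [q [hq q1 q2]] := ex_seg hid F0 Fd eC hx hpd.
have qp : q = p.
  move: q2; rewrite -hl /ell q1 => /eqP; rewrite (can_eq (addrK _)) => /eqP.
  move/(mulfI (lt0r_neq0 Dr)) => e2; case: q q1 e2 {hq} => a b /= -> ->.
  by case: p {hl hpd hx}.
split; first by rewrite -qp.
move=> r hr r1; have := hull_lin Hl hr; rewrite -hl /ell r1 lerD2r ler_pM2l //.
Qed.

End Geo.

Lemma divle (a b x y : int) : 0 < a -> 0 < b ->
  (x%:~R / a%:~R <= y%:~R / b%:~R :> rat) = (x * b <= y * a).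
Proof.
move=> a0 b0; rewrite ler_pdivlMr ?ltr0z // mulrAC ler_pdivrMr ?ltr0z //.
by rewrite -!intrM ler_int.
Qed.

Lemma divlt (a b x y : int) : 0 < a -> 0 < b ->
  (x%:~R / a%:~R < y%:~R / b%:~R :> rat) = (x * b < y * a).
Proof.
move=> a0 b0; rewrite ltr_pdivlMr ?ltr0z // mulrAC ltr_pdivrMr ?ltr0z //.
by rewrite -!intrM ltr_int.
Qed.

Section Main.
Variables (L : unitRingType) (v : L -> int).

Lemma first_edge (h : {poly L}) (d : nat) (e : rat)
  (Hbreak : break_point v h (d%:R, e))
  (Hfirst : forall q, break_point v h q -> d%:R <= q.1) :
  exists (i0 : nat) (Dz Nz : int), [/\ 0 < Dz, (i0 < d)%N, h`_i0 != 0 & h`_d != 0] /\ [/\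
    (forall i, h`_i != 0 -> (i0 <= i)%N),
    Dz * v h`_i0 - Nz * i0%:Z = Dz * v h`_d - Nz * d%:Z,
    (forall i, h`_i != 0 -> Dz * v h`_d - Nz * d%:Z <= Dz * v h`_i - Nz * i%:Z) &
    (forall i, (d < i)%N -> h`_i != 0 -> Dz * v h`_d - Nz * d%:Z < Dz * v h`_i - Nz * i%:Z)].
Proof.
case: Hbreak => NPd [ql [NPl ql1]] [qr [NPr qr1]] notint.
have hex : exists i, h`_i != 0.
  case: NPd => [[c [_ _ s1 _ _]] _]; case: (posnP (size h)) => sh.
    by move: s1; rewrite sh big_ord0 => /eqP; rewrite eq_sym oner_eq0.
  exists (size h).-1; have := lead_coef_eq0 h; rewrite /lead_coef => ->.
  by rewrite -size_poly_eq0 -lt0n sh.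
case: (ex_minnP hex) => i0 hi0 Hmin.
have Hlow : forall i, h`_i != 0 -> (i0 <= i)%N by move=> i; apply: Hmin.
have hid : (i0 < d)%N.
  have := hull_x_ge Hlow (proj1 NPl); rewrite -(ltr_nat rat).
  by move=> h1; apply: le_lt_trans h1 ql1.
have [j hj] : exists j : 'I_(size h), (i0 < j)%N && (h`_j != 0).
  case: (boolP [exists j : 'I_(size h), (i0 < j)%N && (h`_j != 0)]) => [/existsP //| /existsPn hn].
  have : (d <= i0)%N.
    rewrite -(ler_nat rat); apply: hull_x_le (proj1 NPd) => i hi.
    have := hn (Ordinal (ltn_coef hi)); rewrite /= hi andbT; by rewrite -leqNgt.
  by rewrite leqNgt hid.
pose s := fun i : 'I_(size h) => (v h`_i - v h`_i0)%:~R / (i%:Z - i0%:Z)%:~R : rat.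
pose P := fun i : 'I_(size h) => (i0 < i)%N && (h`_i != 0).
case: (@arg_minP _ _ _ j P s hj) => m Pm mmin.
pose Q := fun i : 'I_(size h) => P i && (s i == s m).
have Qm : Q m by rewrite /Q Pm eqxx.
case: (@arg_maxnP _ m Q (fun i : 'I_(size h) => (i : nat)) Qm) => ds /andP[Pds /eqP sds] dsmax.
move: Pds; rewrite /P => /andP[ids hds].
pose Dz := (ds%:Z - i0%:Z); pose Nz := v h`_ds - v h`_i0.
have Dz0 : 0 < Dz by rewrite /Dz subr_gt0 ltz_nat.
have eC : Dz * v h`_i0 - Nz * i0%:Z = Dz * v h`_ds - Nz * ds%:Z by rewrite /Dz /Nz; ring.
have Hline : forall i, h`_i != 0 -> Dz * v h`_ds - Nz * ds%:Z <= Dz * v h`_i - Nz * i%:Z.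
  move=> i hi; rewrite -eC.
  case: (ltngtP i0 i) => [lt|gt|<-]; last by [].
    have Pi : P (Ordinal (ltn_coef hi)) by rewrite /P /= lt hi.
    have := mmin _ Pi; rewrite -sds /s /= divle; last 2 first.
    - by rewrite /Dz subr_gt0 ltz_nat.
    - by rewrite subr_gt0 ltz_nat.
    rewrite /Dz /Nz => h1; rewrite -subr_ge0; rewrite -subr_ge0 in h1; apply: le_trans h1 _; rewrite le_eqVlt; apply/orP; left; apply/eqP; ring.
  by move: (Hlow i hi); rewrite leqNgt gt.
have Hstr : forall i, (ds < i)%N -> h`_i != 0 -> Dz * v h`_ds - Nz * ds%:Z < Dz * v h`_i - Nz * i%:Z.
  move=> i di hi; rewrite -eC.
  have lt : (i0 < i)%N by apply: ltn_trans di.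
  have Pi : P (Ordinal (ltn_coef hi)) by rewrite /P /= lt hi.
  have : s m < s (Ordinal (ltn_coef hi)).
    rewrite lt_neqAle mmin // andbT; apply/negP => /eqP ee.
    have := dsmax (Ordinal (ltn_coef hi)); rewrite /Q Pi -ee eqxx /= => /(_ isT).
    by rewrite leqNgt di.
  rewrite -sds /s /= divlt; last 2 first.
  - by rewrite /Dz subr_gt0 ltz_nat.
  - by rewrite subr_gt0 ltz_nat.
  rewrite /Dz /Nz => h1; rewrite -subr_gt0; rewrite -subr_gt0 in h1; apply: lt_le_trans h1 _; rewrite le_eqVlt; apply/orP; left; apply/eqP; ring.
set C := Dz * v h`_ds - Nz * ds%:Z.
have SP := seg_poly Dz0 ids hi0 hds Hlow eC Hline.
have Dr : 0 < Dz%:~R :> rat by rewrite ltr0z.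
have ell0 : ell Dz Nz (i0%:R, (v h`_i0)%:~R) = C%:~R.
  by rewrite /ell /= /C -eC [in RHS]intrB [in RHS]intrM [in RHS]intrM.
have ell1 : ell Dz Nz (ds%:R, (v h`_ds)%:~R) = C%:~R by rewrite /ell /= /C [in RHS]intrB [in RHS]intrM [in RHS]intrM.
have NP0 : newton_polygon v h (i0%:R, (v h`_i0)%:~R).
  by apply/SP => /=; [rewrite ler_nat ltnW | split].
have NP1 : newton_polygon v h (ds%:R, (v h`_ds)%:~R).
  by apply/SP => /=; [| split => //; rewrite ler_nat ltnW].
have ellc : forall (lam : rat) (q1 q2 : rat * rat),
    ell Dz Nz (lam * q1.1 + (1 - lam) * q2.1, lam * q1.2 + (1 - lam) * q2.2) =
    lam * ell Dz Nz q1 + (1 - lam) * ell Dz Nz q2.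
  by move=> lam [a1 a2] [b1 b2]; rewrite /ell /=; ring.
case: (ltngtP d ds) => [dlt|dgt|deq].
- exfalso; apply: notint.
  have hde : ell Dz Nz (d%:R, e) = C%:~R by case: ((SP (d%:R, e) _).1 NPd) => //=; rewrite ler_nat ltnW.
  have den0 : 0 < ds%:R - i0%:R :> rat by rewrite subr_gt0 ltr_nat.
  pose lam : rat := (ds%:R - d%:R) / (ds%:R - i0%:R).
  have l0 : 0 < lam by apply: divr_gt0 => //; rewrite subr_gt0 ltr_nat.
  have l1 : lam < 1 by rewrite /lam ltr_pdivrMr // mul1r ltrD2l ltrN2 ltr_nat hid.
  have x1 : lam * i0%:R + (1 - lam) * ds%:R = d%:R :> rat by rewrite /lam; field; rewrite lt0r_neq0.
  exists (i0%:R, (v h`_i0)%:~R), (ds%:R, (v h`_ds)%:~R), lam; split => //=.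
  + by rewrite !ltr_nat hid dlt.
  + by rewrite l0 l1.
  have := ellc lam (i0%:R, (v h`_i0)%:~R) (ds%:R, (v h`_ds)%:~R).
  rewrite ell0 ell1 /= -mulrDl [lam + _]addrC subrK mul1r x1 -hde /ell /= => /eqP.
  rewrite (can_eq (addrK _)) => /eqP /(mulfI (lt0r_neq0 Dr)) ->.
  by [].
- exfalso.
  have : d%:R <= ds%:R :> rat.
    apply: (Hfirst (ds%:R, (v h`_ds)%:~R)); split => //.
    + by exists (i0%:R, (v h`_i0)%:~R); split => //=; rewrite ltr_nat.
    + by exists (d%:R, e); split => //=; rewrite ltr_nat.
    case=> q1 [q2 [lam [n1 n2 /andP[c1 c2] /andP[l0 l1] eq]]].
    have e1 := hull_lin Hline (proj1 n1).
    have e2 := hull_gt Hline Hstr (proj1 n2) c2.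
    have := ellc lam q1 q2; rewrite -eq ell1.
    move: e1 e2; set A := ell Dz Nz q1; set B := ell Dz Nz q2; set c := C%:~R.
    move=> e1 e2 e3; nra.
  by rewrite ler_nat leqNgt dgt.
exists i0, Dz, Nz; rewrite deq; split; split => //.
Qed.
End Main.

Unset Implicit Arguments.

Theorem proposition2p7 (L : unitRingType) (v : L -> int)
  (HL : complete_dv_skew_field v) (h : {poly L}) (d : nat) (e : rat)
  (Hbreak : break_point v h (d%:R, e))
  (Hfirst : forall q, break_point v h q -> d%:R <= q.1) :
  (exists f g : {poly L},
     [/\ (size f).-1 = d,
         (forall p, newton_polygon v f p <-> newton_polygon v h p /\ p.1 <= d%:R)
       & h = f * g]) /\
  (exists f g : {poly L},
     [/\ (size f).-1 = d,
         (forall p, newton_polygon v f p <-> newton_polygon v h p /\ p.1 <= d%:R)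
       & h = g * f]).
Proof.
have [i0 [Dz [Nz [[Dz0 hid hi0 hd] [Hlow eC Hline Hstr]]]]] := first_edge Hbreak Hfirst.
have key : forall b : bool, exists g f : {poly L},
    [/\ h = (if b then g * f else f * g), (size f).-1 = d &
        (forall p, newton_polygon v f p <-> newton_polygon v h p /\ p.1 <= d%:R)].
  move=> b; have [g [f [Eh sf fl fon fz]]] := core_both HL Dz0 hd Hline Hstr b.
  exists g, f; split => //; first by rewrite sf.
  have [f0 vf0] := fon i0 (ltnW hid) hi0 eC.
  have [fd vfd] := fon d (leqnn d) hd erefl.
  have flow : forall i, f`_i != 0 -> (i0 <= i)%N.
    move=> i fi; rewrite leqNgt; apply/negP => ii0; move/eqP: fi; apply.
    apply: fz => k hk; apply/eqP; apply: contraT => hk0.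
    by have := Hlow k hk0; rewrite leqNgt (leq_ltn_trans hk ii0).
  have eCf : Dz * v f`_i0 - Nz * i0%:Z = Dz * v f`_d - Nz * d%:Z by rewrite vf0 vfd.
  have flinef : forall i, f`_i != 0 -> Dz * v f`_d - Nz * d%:Z <= Dz * v f`_i - Nz * i%:Z.
    by move=> i; rewrite vfd; apply: fl.
  have SPf := seg_poly Dz0 hid f0 fd flow eCf flinef.
  have SPh := seg_poly Dz0 hid hi0 hd Hlow eC Hline.
  move=> p; split.
    move=> np; have pd : p.1 <= d%:R.
      apply: hull_x_le (proj1 np) => i fi; rewrite -ltnS -sf; exact: ltn_coef fi.
    split=> //; apply/(SPh p pd); rewrite -vfd; exact/(SPf p pd).
  case=> np pd; apply/(SPf p pd); rewrite vfd; exact/(SPh p pd).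
split.
  have [g [f [Eh sf Hp]]] := key false; by exists f, g.
have [g [f [Eh sf Hp]]] := key true; by exists f, g.
Qed.
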